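(* The addition operation on $\mathbb{Q}$ is not definable in the structure $\langle\mathbb{Q};<,\times\rangle$; that is, there is no first-order formula $\varphi(x,y,z)$ in the language $\{<,\times\}$ such that for all rationals $a,b,c$, $\langle\mathbb{Q};<,\times\rangle\models\varphi(a,b,c)$ iff $c=a+b$. *)

(* Defs.v *)
From mathcomp Require Import all_boot all_order all_algebra.
Set Implicit Arguments. Unset Strict Implicit. Unset Printing Implicit Defensive.
Import Order.TTheory GRing.Theory Num.Theory.
Local Open Scope ring_scope.

Inductive term : Type :=
| TVar : nat -> term
| TMul : term -> term -> term.

Inductive formula : Type :=
| FEq  : term -> term -> formula
| FLt  : term -> term -> formula
| FNot : formula -> formula
| FAnd : formula -> formula -> formula
| FOr  : formula -> formula -> formula
| FImp : formula -> formula -> formula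
| FEx  : nat -> formula -> formula
| FAll : nat -> formula -> formula.

Definition assignment := nat -> rat.

Definition upd (e : assignment) (x : nat) (q : rat) : assignment :=
  fun y => if y == x then q else e y.

Fixpoint teval (e : assignment) (t : term) : rat :=
  match t with
  | TVar x => e x
  | TMul t1 t2 => teval e t1 * teval e t2
  end.

Fixpoint sat (e : assignment) (phi : formula) : Prop :=
  match phi with
  | FEq t1 t2 => teval e t1 = teval e t2
  | FLt t1 t2 => teval e t1 < teval e t2
  | FNot p => ~ sat e p
  | FAnd p q => sat e p /\ sat e q
  | FOr p q => sat e p \/ sat e q
  | FImp p q => sat e p -> sat e q
  | FEx x p => exists r : rat, sat (upd e x r) p
  | FAll x p => forall r : rat, sat (upd e x r) p
  end.

Fixpoint free_in (y : nat) (phi : formula) : bool :=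
  let ft := fix ft (t : term) : bool :=
    match t with TVar x => x == y | TMul a b => ft a || ft b end in
  match phi with
  | FEq a b | FLt a b => ft a || ft b
  | FNot p => free_in y p
  | FAnd p q | FOr p q | FImp p q => free_in y p || free_in y q
  | FEx x p | FAll x p => (x != y) && free_in y p
  end.

(* Main.v *)
Require Import Defs.
From mathcomp Require Import all_boot all_order all_algebra.
From mathcomp Require Import zify ring lra.
From Stdlib Require Import Classical.
Set Implicit Arguments. Unset Strict Implicit. Unset Printing Implicit Defensive.
Import Order.TTheory GRing.Theory Num.Theory.
Local Open Scope ring_scope.
Definition vq (p : nat) (x : rat) : int :=
  (logn p `|numq x|)%:Z - (logn p `|denq x|)%:Z.

Lemma vq_frac p (m n : int) : m != 0 -> n != 0 ->
  vq p (m%:~R / n%:~R) = (logn p `|m|)%:Z - (logn p `|n|)%:Z.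
Proof.
move=> m0 n0; rewrite /vq; set x : rat := _ / _.
have x0 : x != 0 by rewrite /x mulf_eq0 invr_eq0 !intr_eq0 negb_or m0 n0.
have e : numq x * n = m * denq x.
  apply: (@intr_inj rat); rewrite !rmorphM /= numqE /x.
  by field; rewrite intr_eq0.
have e2 : (`|numq x| * `|n|)%N = (`|m| * `|denq x|)%N by rewrite -!abszM e.
have nq0 : (0 < `|numq x|)%N by rewrite absz_gt0 numq_eq0.
have dq0 : (0 < `|denq x|)%N by rewrite absz_gt0 denq_neq0.
have n0' : (0 < `|n|)%N by rewrite absz_gt0.
have m0' : (0 < `|m|)%N by rewrite absz_gt0.
have := congr1 (logn p) e2; rewrite !lognM //; lia.
Qed.

Lemma vqE (x : rat) : x = (numq x)%:~R / (denq x)%:~R.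
Proof. by rewrite divq_num_den. Qed.

Lemma vqM p (x y : rat) : x != 0 -> y != 0 -> vq p (x * y) = vq p x + vq p y.
Proof.
move=> x0 y0.
have nx : numq x != 0 by rewrite numq_eq0.
have ny : numq y != 0 by rewrite numq_eq0.
have -> : x * y = (numq x * numq y)%:~R / (denq x * denq y)%:~R.
  rewrite !rmorphM /= {1}(vqE x) {1}(vqE y).
  by rewrite invfM; ring.
rewrite vq_frac ?mulf_neq0 ?denq_neq0 // !abszM.
rewrite /vq.
have nq0 : (0 < `|numq x|)%N by rewrite absz_gt0.
have nq1 : (0 < `|numq y|)%N by rewrite absz_gt0.
have dq0 : (0 < `|denq x|)%N by rewrite absz_gt0 denq_neq0.
have dq1 : (0 < `|denq y|)%N by rewrite absz_gt0 denq_neq0.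
rewrite !lognM //; lia.
Qed.

Lemma vq1 p : vq p 1 = 0.
Proof. by rewrite /vq /= logn1; lia. Qed.

Lemma vqV p (x : rat) : x != 0 -> vq p x^-1 = - vq p x.
Proof.
move=> x0; have := vqM p x0 (invr_neq0 x0); rewrite mulfV // vq1; lia.
Qed.

Lemma vqXn p (x : rat) (n : nat) : x != 0 -> vq p (x ^+ n) = (n%:Z) * vq p x.
Proof.
move=> x0; elim: n => [|n IH]; first by rewrite expr0 vq1 mul0r.
rewrite exprS vqM ?expf_neq0 // IH; lia.
Qed.

Lemma vqXz p (x : rat) (z : int) : x != 0 -> vq p (x ^ z) = z * vq p x.
Proof.
move=> x0; case: z => n.
  by rewrite -exprnP vqXn.
rewrite NegzE -exprnN vqV ?expf_neq0 // vqXn //; lia.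
Qed.

Lemma vq_nat p (n : nat) : (0 < n)%N -> vq p n%:R = (logn p n)%:Z.
Proof.
move=> n0; have := @vq_frac p n%:Z 1; rewrite divr1 /=.
rewrite -[(n%:Z)%:~R]/(n%:R : rat) => ->; last by [].
  by rewrite logn1 /=; lia.
by rewrite -lt0n.
Qed.

Lemma vq_prime p : prime p -> vq p p%:R = 1.
Proof. by move=> pp; rewrite vq_nat ?prime_gt0 // logn_prime ?eqxx. Qed.

Lemma logn_small p n : (0 < n)%N -> (n < p)%N -> logn p n = 0%N.
Proof.
move=> n0 np; apply/eqP; rewrite -leqn0 leqNgt logn_gt0; apply/negP.
rewrite mem_primes => /and3P[_ _ /dvdn_leq]; move=> /(_ n0); lia.
Qed.

Lemma vq_small p (x : rat) : x != 0 -> (`|numq x| < p)%N -> (`|denq x| < p)%N ->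
  vq p x = 0.
Proof.
move=> x0 hn hd; rewrite /vq !logn_small //.
  by rewrite absz_gt0 denq_neq0.
by rewrite absz_gt0 numq_eq0.
Qed.
Definition P (W : nat) (a : nat -> rat) (c : nat -> int) : rat :=
  \prod_(i < W) a i ^ c i.
Definition pos W (a : nat -> rat) := forall i, (i < W)%N -> 0 < a i.
Definition ispow (n : nat) (q : rat) := exists w : rat, 0 < w /\ q = w ^+ n.
Definition bnd (B W : nat) (c : nat -> int) := forall i, (i < W)%N -> (`|c i| <= B)%N.
Definition ext (a : nat -> rat) W (s : rat) := fun i => if i == W then s else a i.
Definition cext (c : nat -> int) W (k : int) := fun i => if i == W then k else c i.

Lemma P_gt0 W a c : pos W a -> 0 < P W a c.
Proof. by move=> pa; apply: prodr_gt0 => i _; apply: exprz_gt0; apply: pa. Qed.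

Lemma P_eq W a b c d : (forall i, (i < W)%N -> a i = b i /\ c i = d i) ->
  P W a c = P W b d.
Proof. by move=> h; apply: eq_bigr => i _; case: (h i (ltn_ord i)) => -> ->. Qed.

Lemma PD W a c d : pos W a -> P W a (fun i => c i + d i) = P W a c * P W a d.
Proof.
move=> pa; rewrite /P -big_split /=; apply: eq_bigr => i _.
by rewrite expfzDr // gt_eqF // pa.
Qed.

Lemma prodXz (I : finType) (F : I -> rat) (m : int) :
  (\prod_(i : I) F i) ^ m = \prod_(i : I) F i ^ m.
Proof.
apply: (big_morph (fun x => x ^ m)); first by move=> x y; rewrite expfzMl.
by rewrite exp1rz.
Qed.

Lemma PZ W a c (m : int) : P W a (fun i => m * c i) = P W a c ^ m.
Proof.
rewrite /P prodXz; apply: eq_bigr => i _; by rewrite exprz_exp mulrC.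
Qed.

Lemma PN W a c : P W a (fun i => - c i) = (P W a c)^-1.
Proof.
rewrite -exprN1 -PZ; apply: P_eq => i _; split => //; by rewrite mulN1r.
Qed.

Lemma P0 W a : P W a (fun _ => 0) = 1.
Proof. by rewrite /P big1. Qed.

Lemma P_ext W a s c : P W.+1 (ext a W s) c = P W a c * s ^ c W.
Proof.
rewrite /P big_ord_recr /= /ext eqxx; congr (_ * _); apply: eq_bigr => i _.
by rewrite (ltn_eqF (ltn_ord i)).
Qed.

Lemma P_ext0 W a s c : c W = 0 -> P W.+1 (ext a W s) c = P W a c.
Proof. by move=> h; rewrite P_ext h expr0z mulr1. Qed.

Lemma pos_ext W a s : pos W a -> 0 < s -> pos W.+1 (ext a W s).
Proof.
move=> pa s0 i; rewrite ltnS leq_eqVlt /ext; case: eqP => // _ /= ; exact: pa.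
Qed.

Lemma ispowM n x y : ispow n x -> ispow n y -> ispow n (x * y).
Proof.
move=> [w [w0 ->]] [u [u0 ->]]; exists (w * u); split; first exact: mulr_gt0.
by rewrite exprMn.
Qed.

Lemma ispowV n x : ispow n x -> ispow n x^-1.
Proof.
move=> [w [w0 ->]]; exists w^-1; split; first by rewrite invr_gt0.
by rewrite exprVn.
Qed.

Lemma ispowXn n z : 0 < z -> ispow n (z ^+ n).
Proof. by move=> z0; exists z. Qed.

Lemma ispowXz n x (j : int) : ispow n x -> ispow n (x ^ j).
Proof.
move=> [w [w0 ->]]; exists (w ^ j); split; first exact: exprz_gt0.
by rewrite !exprnP !exprz_exp mulrC.
Qed.

Lemma ispowMr n u v : 0 < u -> 0 < v -> (ispow n (u * v ^+ n) <-> ispow n u).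
Proof.
move=> u0 v0; split => h; last by apply: ispowM => //; apply: ispowXn.
have -> : u = (u * v ^+ n) * (v^-1) ^+ n.
  by rewrite exprVn -mulrA mulfV ?mulr1 // expf_neq0 // gt_eqF.
by apply: ispowM => //; apply: ispowXn; rewrite invr_gt0.
Qed.

Lemma ispowX n k X : 0 < X -> (0 < k)%N -> (ispow n X <-> ispow (n * k) (X ^+ k)).
Proof.
move=> X0 k0; split.
  by move=> [w [w0 ->]]; exists w; split => //; rewrite exprM.
move=> [w [w0 e]]; exists w; split => //.
apply/eqP; rewrite -(eqrXn2 k0) ?(ltW X0) ?exprn_ge0 ?(ltW w0) //.
by rewrite e -exprM.
Qed.
Definition Good (B W : nat) (a a' : nat -> rat) := pos W a /\ pos W a' /\
  forall c, bnd B W c -> (P W a c < 1 <-> P W a' c < 1) /\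
     forall n, (0 < n)%N -> (n <= B)%N -> (ispow n (P W a c) <-> ispow n (P W a' c)).

Lemma Good_sym B W a a' : Good B W a a' -> Good B W a' a.
Proof.
move=> [pa [pa' h]]; split => //; split => // c bc; have [h1 h2] := h c bc.
split; first by split => /h1.
by move=> n n0 nB; split => /(h2 n n0 nB).
Qed.

Lemma Good_mono B B2 W a a' : (B2 <= B)%N -> Good B W a a' -> Good B2 W a a'.
Proof.
move=> le [pa [pa' h]]; split => //; split => // c bc.
have bc' : bnd B W c by move=> i /bc; move/leq_trans; apply.
have [h1 h2] := h c bc'; split => // n n0 nB; apply: h2 => //; exact: leq_trans le.
Qed.

Lemma Good_transfer B B2 W W2 a a' b b' : (B2 <= B)%N -> Good B W a a' ->
  pos W2 b -> pos W2 b' ->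
  (forall c, bnd B2 W2 c -> exists c2, bnd B W c2 /\
      P W2 b c = P W a c2 /\ P W2 b' c = P W a' c2) -> Good B2 W2 b b'.
Proof.
move=> le [pa [pa' h]] pb pb' tr; split => //; split => // c bc.
have [c2 [bc2 [-> ->]]] := tr c bc; have [h1 h2] := h c2 bc2.
split => // n n0 nB; apply: h2 => //; exact: leq_trans le.
Qed.

Lemma Good_gt B W a a' c : Good B W a a' -> bnd B W c ->
  (1 < P W a c <-> 1 < P W a' c).
Proof.
move=> [pa [pa' h]] bc.
have bc' : bnd B W (fun i => - c i) by move=> i /bc; rewrite abszN.
have [h1 _] := h _ bc'; rewrite !PN !invf_lt1 ?P_gt0 // in h1.
Qed.

Lemma powrel W a s c d : pos W a -> 0 < s -> P W.+1 (ext a W s) c = 1 ->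
  (P W.+1 (ext a W s) d) ^ (c W) = P W a (fun i => c W * d i - d W * c i).
Proof.
move=> pa s0 e.
have pe := pos_ext pa s0.
rewrite -PZ.
have -> : P W.+1 (ext a W s) (fun i => c W * d i) =
   P W.+1 (ext a W s) (fun i => (c W * d i - d W * c i) + d W * c i).
  by apply: P_eq => i _; split => //; rewrite subrK.
rewrite PD // PZ e exp1rz mulr1 P_ext0 //; by rewrite mulrC subrr.
Qed.

Lemma bnd_le B B2 W c : (B <= B2)%N -> bnd B W c -> bnd B2 W c.
Proof. by move=> le bc i /bc h; exact: leq_trans le. Qed.

Lemma coreE B' W a a' s c : Good (2 * B' * B') W a a' -> 0 < s ->
  bnd B' W.+1 c -> 0 < c W -> P W.+1 (ext a W s) c = 1 ->
  exists s', 0 < s' /\ Good B' W.+1 (ext a W s) (ext a' W s').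
Proof.
move=> G s0 bc cW0 e.
have [pa [pa' h]] := G.
set k := `|c W|%N.
have ck : c W = k%:Z by rewrite /k gez0_abs // ltW.
have k0 : (0 < k)%N by rewrite /k absz_gt0 gt_eqF.
have kB : (k <= B')%N by apply: bc.
have bcW : bnd (2 * B' * B') W (fun i => - c i).
  move=> i iW; rewrite abszN; have := bc i (ltnW iW); move: kB k0; clear; nia.
have e1 : P W a (fun i => - c i) = s ^+ k.
  move: e; rewrite P_ext PN ck -exprnP => e.
  have Pn0 : P W a c != 0 by rewrite gt_eqF // P_gt0.
  have -> : s ^+ k = (P W a c)^-1 * (P W a c * s ^+ k) by rewrite mulrA mulVf ?mul1r.
  by rewrite e mulr1.
have [_ h2] := h _ bcW.
have : ispow k (P W a' (fun i => - c i)).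
  apply/(h2 k k0); first by move: kB k0; clear; nia.
  by rewrite e1; apply: ispowXn.
move=> [w [w0 e2]].
exists w; split => //.
have e' : P W.+1 (ext a' W w) c = 1.
  rewrite P_ext ck -exprnP; move: e2; rewrite PN => e2.
  rewrite -[P W a' c]invrK e2 mulrC mulfV // expf_neq0 // gt_eqF //.
have pe := pos_ext pa s0; have pe' := pos_ext pa' w0.
split => //; split => // d bd.
set D := fun i => c W * d i - d W * c i.
have bD : bnd (2 * B' * B') W D.
  move=> i iW; rewrite /D; have := bd i (ltnW iW); have := bc i (ltnW iW).
  have := bd W (ltnSn W); move: kB ck; clear; nia.
have r1 : (P W.+1 (ext a W s) d) ^+ k = P W a D.
  by rewrite exprnP -ck; exact: powrel d pa s0 e.
have r2 : (P W.+1 (ext a' W w) d) ^+ k = P W a' D.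
  by rewrite exprnP -ck; exact: powrel d pa' w0 e'.
have [hD1 hD2] := h D bD.
split.
  rewrite -(expr_lt1 k0 (ltW (P_gt0 d pe))) -(expr_lt1 k0 (ltW (P_gt0 d pe'))).
  by rewrite r1 r2.
move=> n n0 nB.
rewrite (ispowX n (P_gt0 d pe) k0) (ispowX n (P_gt0 d pe') k0) r1 r2.
apply: hD2; first by rewrite muln_gt0 n0.
by move: nB kB; clear; nia.
Qed.
Lemma ex_min (Pr : nat -> Prop) : (exists n, Pr n) ->
  exists n, Pr n /\ forall m, Pr m -> (n <= m)%N.
Proof.
move=> [n0 h0]; apply: NNPP => hn.
suff : forall n m, (m <= n)%N -> ~ Pr m by move/(_ n0 n0 (leqnn _)).
elim=> [|n IH] m.
  rewrite leqn0 => /eqP -> p0; apply: hn; exists 0%N; split => // m _.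
move=> le pm; case: (leqP m n) => [mn|lt]; first by apply: (IH m mn pm).
have em : m = n.+1 by apply/eqP; rewrite eqn_leq le lt.
apply: hn; exists m; split => // k pk; case: (leqP m k) => // km.
by exfalso; apply: (IH k) => //; rewrite -ltnS -em.
Qed.

Definition zc (W : nat) (k : int) : nat -> int := fun i => if i == W then k else 0.

Lemma P_zc W a s k : P W.+1 (ext a W s) (zc W k) = s ^ k.
Proof.
rewrite P_ext /zc eqxx (_ : P W a _ = 1) ?mul1r //.
by rewrite -(P0 W a); apply: P_eq => i iW; rewrite (ltn_eqF iW).
Qed.

Lemma stepA N W a s : (0 < N)%N -> pos W a -> 0 < s ->
  exists d c1, (0 < d)%N /\ (d %| N)%N /\ c1 W = d%:Z /\
    (forall i, (i < W)%N -> 0 <= c1 i < N%:Z) /\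
    ispow N (P W.+1 (ext a W s) c1) /\
    forall c, ispow N (P W.+1 (ext a W s) c) -> (d%:Z %| c W)%Z.
Proof.
move=> N0 pa s0; have pe := pos_ext pa s0.
set R := fun k : int => exists c, c W = k /\ ispow N (P W.+1 (ext a W s) c).
have RN : R N%:Z.
  exists (zc W N); split; first by rewrite /zc eqxx.
  by rewrite P_zc -exprnP; apply: ispowXn.
have Rsub : forall k1 k2 (m : int), R k1 -> R k2 -> R (k1 - m * k2).
  move=> k1 k2 m [c1 [e1 h1]] [c2 [e2 h2]].
  exists (fun i => c1 i + (- m) * c2 i); split; first by rewrite e1 e2 mulNr.
  rewrite PD // PZ; apply: ispowM => //; exact: ispowXz.
have [d [[Rd d0] dmin]] : exists d, (R d%:Z /\ (0 < d)%N) /\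
     forall m, R m%:Z /\ (0 < m)%N -> (d <= m)%N.
  by apply: (ex_min (Pr := fun d => R d%:Z /\ (0 < d)%N)); exists N.
have Rdvd : forall k, R k -> (d%:Z %| k)%Z.
  move=> k Rk; have := Rsub k d%:Z (k %/ d)%Z Rk Rd.
  have e : k - (k %/ d)%Z * d%:Z = (k %% d)%Z by rewrite {1}(divz_eq k d%:Z); ring.
  rewrite e => Rr.
  have r0 : 0 <= (k %% d)%Z by rewrite modz_ge0 // lt0n_neq0.
  have rd : (k %% d)%Z < d%:Z by rewrite ltz_pmod.
  apply/dvdz_mod0P/eqP; apply: contraT => rn0.
  have p : (0 < `|(k %% d)%Z|)%N by rewrite absz_gt0.
  have := dmin `|(k %% d)%Z|%N; rewrite gez0_abs // => /(_ (conj Rr p)).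
  move: rd r0; clear; lia.
have [c [cW hc]] := Rd.
set e := fun i => if i == W then 0 else (c i %/ N)%Z.
exists d, (fun i => c i + (- N%:Z) * e i).
split => //; split; first by have := Rdvd _ RN.
split; first by rewrite /e eqxx mulr0 addr0.
split.
  move=> i iW; rewrite /e (ltn_eqF iW).
  have -> : c i + - N%:Z * (c i %/ N)%Z = (c i %% N)%Z.
    by rewrite {1}(divz_eq (c i) N%:Z); ring.
  by rewrite modz_ge0 ?ltz_pmod // lt0n_neq0.
split; last by move=> c' hc'; apply: Rdvd; exists c'.
rewrite PD // PZ; apply: ispowM => //.
rewrite -exprnN; apply: ispowV; apply: ispowXn; exact: P_gt0.
Qed.
Lemma vqP p W a c : pos W a -> vq p (P W a c) = \sum_(i < W) c i * vq p (a i).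
Proof.
elim: W => [|W IH] pa; first by rewrite /P !big_ord0 vq1.
have pa' : pos W a by move=> i iW; apply: pa; exact: ltnW.
rewrite /P big_ord_recr big_ord_recr /= vqM.
- by rewrite -IH // vqXz // gt_eqF // pa.
- by rewrite gt_eqF // (P_gt0 c pa').
- by rewrite expfz_neq0 // gt_eqF // pa.
Qed.

Lemma bound_ex W (g : nat -> nat) : exists m, forall i, (i < W)%N -> (g i <= m)%N.
Proof.
elim: W => [|W [m hm]]; first by exists 0%N.
exists (maxn m (g W)) => i; rewrite ltnS leq_eqVlt => /orP[/eqP ->|/hm h].
  exact: leq_maxr.
exact: leq_trans h (leq_maxl _ _).
Qed.

Lemma fresh W (f : nat -> rat) (y : rat) : exists q, prime q /\
  (forall i, (i < W)%N -> f i != 0 -> vq q (f i) = 0) /\ (y != 0 -> vq q y = 0).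
Proof.
have [m hm] := bound_ex W (fun i => `|numq (f i)| + `|denq (f i)|)%N.
have [q mq pq] := prime_above (m + `|numq y| + `|denq y|)%N.
exists q; split => //; split.
  move=> i iW fi0; have := hm i iW => h; apply: vq_small => //; move: h mq; clear; lia.
move=> y0; apply: vq_small => //; move: mq; clear; lia.
Qed.
Lemma ispowMu n x u : 0 < x -> ispow n u -> (ispow n (x * u) <-> ispow n x).
Proof. by move=> x0 [v [v0 ->]]; apply: ispowMr. Qed.

Lemma P_split W a c1 c (j : int) : pos W a ->
  P W a c = P W a (fun i => c i - j * c1 i) * (P W a c1) ^ j.
Proof.
move=> pa; rewrite -PZ -PD //; apply: P_eq => i _; split => //; by rewrite subrK.
Qed.

Lemma stepC B K W a a' s N d c1 y q :
  Good B W a a' -> 0 < s -> 0 < y -> prime q -> (0 < d)%N -> (d %| N)%N ->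
  (0 < N)%N -> (N <= B)%N -> (K + K * N <= B)%N ->
  c1 W = d%:Z -> (forall i, (i < W)%N -> 0 <= c1 i < N%:Z) ->
  ispow N (P W.+1 (ext a W s) c1) ->
  (forall c, ispow N (P W.+1 (ext a W s) c) -> (d%:Z %| c W)%Z) ->
  P W a' (fun i => - c1 i) = y ^+ d ->
  (forall i, (i < W)%N -> vq q (a' i) = 0) -> vq q y = 0 ->
  forall c, bnd K W.+1 c ->
  (ispow N (P W.+1 (ext a W s) c) <->
   ispow N (P W.+1 (ext a' W (y * q%:R ^+ (N %/ d))) c)).
Proof.
move=> [pa [pa' h]] s0 y0 pq d0 dN N0 NB KB c1W c1b pc1 hdvd ey vqa vqy c bc.
have q0 : (0 : rat) < q%:R by rewrite ltr0n prime_gt0.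
set t := y * q%:R ^+ (N %/ d).
have t0 : 0 < t by rewrite mulr_gt0 // exprn_gt0.
have pe := pos_ext pa s0; have pe' := pos_ext pa' t0.
have Nd : N = (N %/ d * d)%N by rewrite divnK.
case: (boolP (d%:Z %| c W)%Z) => [/dvdzP [j cj]|nd]; last first.
  split => [/hdvd|]; first by rewrite (negbTE nd).
  move=> [u [u0 eu]]; exfalso; move/negP: nd; apply.
  have := congr1 (vq q) eu; rewrite vqP // vqXn ?gt_eqF //.
  rewrite big_ord_recr /= big1 ?add0r; last first.
    by move=> i _; rewrite /ext (ltn_eqF (ltn_ord i)) vqa // mulr0.
  rewrite /ext eqxx /t vqM ?gt_eqF ?exprn_gt0 // vqy vqXn ?gt_eqF // vq_prime //.
  rewrite add0r mulr1 => e; apply/dvdzP; exists (vq q u).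
  have m0 : (0 < N %/ d)%N by rewrite divn_gt0 // dvdn_leq.
  move: e m0; rewrite [in N%:Z]Nd; set m := (N %/ d)%N; move: (vq q u) => v.
  clear; move=> e m0.
  have : (m%:Z) * (c W - v * d%:Z) = 0 by rewrite PoszM in e; rewrite mulrBr; lia.
  by move/eqP; rewrite mulf_eq0 subr_eq0 => /orP[/eqP|/eqP] //; lia.
set D := fun i => c i - j * c1 i.
have DW : D W = 0 by rewrite /D cj c1W; ring.
have jK : (`|j| <= K)%N.
  have := bc W (ltnSn W); rewrite cj abszM; move: d0; clear; nia.
have bD : bnd B W D.
  move=> i iW; rewrite /D; have := bc i (ltnW iW); have := c1b i iW.
  move: jK KB; clear; nia.
have [_ hD] := h D bD.
have pc1' : ispow N (P W.+1 (ext a' W t) c1).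
  rewrite P_ext c1W -exprnP /t exprMn -ey -exprM -Nd PN mulrA mulfV ?mul1r.
    exact: ispowXn.
  by rewrite gt_eqF // P_gt0.
rewrite (P_split c1 c j pe) (P_split c1 c j pe').
rewrite (ispowMu (P_gt0 _ pe) (ispowXz j pc1)).
rewrite (ispowMu (P_gt0 _ pe') (ispowXz j pc1')).
rewrite !P_ext0 //; exact: hD.
Qed.
Definition mx (x y : rat) := if x <= y then y else x.
Definition mn (x y : rat) := if x <= y then x else y.

Section Folds.
Variables (T : Type) (L : T -> bool) (g : T -> rat).
Definition fmax cs := foldr (fun x m => if L x then mx (g x) m else m) 0 cs.
Definition fmin (i : rat) cs := foldr (fun x m => if L x then mn (g x) m else m) i cs.

Lemma fmax_ge0 cs : 0 <= fmax cs.
Proof. elim: cs => //= x cs IH; case: (L x) => //; rewrite /mx; case: ifP => //; lra. Qed.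

Lemma fmax_ub cs x : List.In x cs -> L x -> g x <= fmax cs.
Proof.
elim: cs => //= y cs IH [<-|xi] Lx.
  rewrite Lx /mx; case: ifP => //; lra.
have := IH xi Lx; case: (L y) => //; rewrite /mx; case: ifP => //; lra.
Qed.

Lemma fmax_lt cs v : 0 < v -> (forall x, List.In x cs -> L x -> g x < v) -> fmax cs < v.
Proof.
move=> v0; elim: cs => //= y cs IH hv.
have h1 : fmax cs < v by apply: IH => x xi; apply: hv; right.
case Ly: (L y) => //; rewrite /mx; case: ifP => // _; apply: hv => //; by left.
Qed.

Lemma fmin_lb i cs x : List.In x cs -> L x -> fmin i cs <= g x.
Proof.
elim: cs => //= y cs IH [<-|xi] Lx.
  rewrite Lx /mn; case: ifP => //; lra.
have := IH xi Lx; case: (L y) => //; rewrite /mn; case: ifP => //; lra.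
Qed.

Lemma fmin_gt i cs v : v < i -> (forall x, List.In x cs -> L x -> v < g x) -> v < fmin i cs.
Proof.
move=> v0; elim: cs => //= y cs IH hv.
have h1 := IH (fun x xi => hv x (or_intror xi)).
case Uy: (L y) => //; rewrite /mn; case: ifP => // _; apply: hv => //; by left.
Qed.
End Folds.

Lemma sep (T : Type) (cs : list T) (L U : T -> bool) (g : T -> rat) :
  (forall x, List.In x cs -> 0 < g x) ->
  (forall x y, List.In x cs -> List.In y cs -> L x -> U y -> g x < g y) ->
  exists lo hi, 0 < lo /\ lo < hi /\ forall x, List.In x cs ->
     (L x -> g x <= lo) /\ (U x -> hi <= g x).
Proof.
move=> gpos gsep.
set lo0 := fmax L g cs.
have F1 : 0 <= lo0 := fmax_ge0 L g cs.
set hi0 := fmin U g (lo0 + 1) cs.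
have h0 : 0 < hi0 by apply: fmin_gt => [|x xi _]; [lra | exact: gpos].
have h1 : lo0 < hi0.
  apply: fmin_gt => [|y yi Uy]; first lra.
  apply: fmax_lt; first exact: gpos.
  by move=> x xi Lx; apply: gsep.
exists (mx lo0 (hi0 / 2)), hi0; split; first by rewrite /mx; case: ifP; lra.
split; first by rewrite /mx; case: ifP; lra.
move=> x xi; split; last exact: fmin_lb.
move=> Lx; have := @fmax_ub T L g cs x xi Lx; rewrite -/lo0 /mx; case: ifP; lra.
Qed.

Lemma bern_up (M : nat) (x : rat) : 0 <= x -> x <= 1 ->
  (1 + x) ^+ M + x <= 1 + (2 ^ M)%:R * x.
Proof.
move=> x0 x1; elim: M => [|M IH]; first by rewrite expr0 mul1r; lra.
rewrite exprS expnS natrM.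
have h2 : 1 <= (2 ^ M)%:R :> rat by rewrite ler1n expn_gt0.
move: h2 IH; set m : rat := (2 ^ M)%:R => h2 IH.
have h3 : (1 + x) * (1 + x) ^+ M <= (1 + x) * (1 + m * x - x).
  by rewrite ler_pM2l //; lra.
have h4 : 0 <= (m - 1) * (x - x * x) by apply: mulr_ge0; nra.
nra.
Qed.
Lemma bern_low (i : nat) (x : rat) : 0 <= x -> 1 + i%:R * x <= (1 + x) ^+ i.
Proof.
move=> x0; elim: i => [|i IH]; first by rewrite expr0 mul0r addr0.
rewrite exprS -natr1.
have h : (1 + x) * (1 + i%:R * x) <= (1 + x) * (1 + x) ^+ i by rewrite ler_pM2l //; lra.
have h2 : 0 <= i%:R * x * x by rewrite mulr_ge0 // mulr_ge0.
nra.
Qed.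

Lemma dense_pow (M : nat) (lo hi : rat) : (0 < M)%N -> 0 < lo -> lo < hi ->
  exists w, 0 < w /\ lo < w ^+ M /\ w ^+ M < hi.
Proof.
move=> M0 lo0 lohi.
set K : rat := (2 ^ M)%:R.
have K1 : 1 <= K by rewrite ler1n expn_gt0.
have [D hD] : exists D : nat, lo * K / (hi - lo) < D.+1%:R.
  exists (Num.Def.archi_bound (lo * K / (hi - lo))).
  rewrite -natr1; have := @archi_boundP _ (lo * K / (hi - lo)).
  have : 0 <= lo * K / (hi - lo) by rewrite divr_ge0 ?mulr_ge0 //; lra.
  move=> h /(_ h); lra.
move: hD; set D' := D.+1; move: D' => {}D hD.
have D0 : (0 < D)%N.
  rewrite -(ltr0n rat); apply: le_lt_trans hD; rewrite divr_ge0 ?mulr_ge0 //; lra.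
set x : rat := D%:R^-1.
have Dp : (0 : rat) < D%:R by rewrite ltr0n.
have x0 : 0 < x by rewrite invr_gt0.
have x1 : x <= 1 by rewrite /x invf_le1 // ler1n.
set r := 1 + x.
have r0' : 0 < r by rewrite /r addr_gt0.
have rM : lo * r ^+ M < hi.
  have := bern_up M (ltW x0) x1; rewrite -/K -/r => h.
  have : lo * K * x < hi - lo.
    rewrite /x ltr_pdivrMr //; rewrite ltr_pdivrMr ?subr_gt0 // in hD.
    by move: hD; rewrite [X in _ < X]mulrC.
  have h' : r ^+ M <= 1 + K * x by lra.
  have : lo * r ^+ M <= lo * (1 + K * x) by rewrite ler_pM2l.
  rewrite mulrDr mulr1 mulrA; lra.
set w0 := mn lo 1.
have w00 : 0 < w0 by rewrite /w0 /mn; case: ifP.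
have w01 : w0 <= 1 by rewrite /w0 /mn; case: ifP => //; lra.
have w0lo : w0 <= lo by rewrite /w0 /mn; case: ifP => //; lra.
have w0M : w0 ^+ M <= lo by apply: le_trans w0lo; apply: ler_iXnr => //; lra.
set m1 := mx lo 1.
have m11 : 1 <= m1 by rewrite /m1 /mx; case: ifP => //; lra.
have m1lo : lo <= m1 by rewrite /m1 /mx; case: ifP => //; lra.
have exP : exists i, lo < (w0 * r ^+ i) ^+ M.
  have [i hi1] : exists i : nat, D%:R * m1 / w0 < i%:R.
    exists (Num.Def.archi_bound (D%:R * m1 / w0)).
    by apply: archi_boundP; rewrite divr_ge0 // ?mulr_ge0 //; move: m11 w00; clear; lra.
  exists i.
  have hb := bern_low i (ltW x0); rewrite -/r in hb.
  have hix : m1 < w0 * (i%:R * x).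
    rewrite /x mulrA ltr_pdivlMr // mulrC [w0 * _]mulrC.
    by rewrite ltr_pdivrMr // in hi1.
  have hw : m1 < w0 * r ^+ i.
    have : w0 * (1 + i%:R * x) <= w0 * r ^+ i by rewrite ler_pM2l.
    rewrite mulrDr mulr1 => H; move: hix w00 H; clear; lra.
  apply: (le_lt_trans m1lo); apply: (lt_le_trans hw).
  by apply: ler_eXnr => //; move: m11 hw; clear; lra.
case: (ex_minnP exP) => i Pi imin.
case: i Pi imin => [|j] Pi imin.
  by move: Pi; rewrite expr0 mulr1 => Pi; move: Pi w0M; clear; lra.
have nPj : (w0 * r ^+ j) ^+ M <= lo.
  by rewrite leNgt; apply/negP => /imin; rewrite ltnn.
exists (w0 * r ^+ j.+1); split; first by rewrite mulr_gt0 // exprn_gt0.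
split => //.
rewrite exprSr mulrA exprMn.
have r0 : 0 < r ^+ M by rewrite exprn_gt0.
have : (w0 * r ^+ j) ^+ M * r ^+ M <= lo * r ^+ M by rewrite ler_pM2r.
move: rM; clear; lra.
Qed.
Definition zs (B : nat) : list int :=
  List.map (fun n : nat => n%:Z - B%:Z) (List.seq 0 (2 * B).+1).

Lemma zs_in B z : (`|z| <= B)%N -> List.In z (zs B).
Proof.
move=> zB; apply/List.in_map_iff; exists (absz (z + B%:Z)); split.
  rewrite gez0_abs; first by rewrite addrK.
  by move: zB; clear; lia.
apply/List.in_seq; move: zB; clear; lia.
Qed.

Lemma zs_bnd B z : List.In z (zs B) -> (`|z| <= B)%N.
Proof.
move/List.in_map_iff => [n [<- /List.in_seq hn]]; move: hn; clear; lia.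
Qed.

Fixpoint enumc (B W : nat) : list (nat -> int) :=
  match W with
  | 0 => [:: fun _ => 0]
  | W'.+1 => List.flat_map (fun c => List.map (fun z => cext c W' z) (zs B)) (enumc B W')
  end.

Lemma enumc_cov B W c : bnd B W c ->
  exists c2, List.In c2 (enumc B W) /\ forall i, (i < W)%N -> c i = c2 i.
Proof.
elim: W c => [|W IH] c bc; first by exists (fun _ => 0); split => //; left.
have bc' : bnd B W c by move=> i iW; apply: bc; exact: ltnW.
have [c2 [c2i h]] := IH c bc'.
exists (cext c2 W (c W)); split.
  apply/List.in_flat_map; exists c2; split => //; apply/List.in_map_iff.
  exists (c W); split => //; apply: zs_in; exact: bc.
move=> i; rewrite ltnS leq_eqVlt /cext => /orP[/eqP ->|iW]; first by rewrite eqxx.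
by rewrite (ltn_eqF iW); apply: h.
Qed.

Lemma enumc_bnd B W c2 : List.In c2 (enumc B W) -> bnd B W c2.
Proof.
elim: W c2 => [|W IH] c2; first by move=> _ i.
move=> H; have [c [ci H2]] := proj1 (List.in_flat_map (fun c => List.map (fun z => cext c W z) (zs B)) _ _) H.
have [z [<- zi]] := proj1 (List.in_map_iff (fun z => cext c W z) (zs B) _) H2.
move=> i; rewrite ltnS leq_eqVlt /cext => /orP[/eqP ->|iW]; first by rewrite eqxx; exact: zs_bnd.
by rewrite (ltn_eqF iW); apply: IH.
Qed.
Lemma ratio_lt W a s c1 c2 : pos W a -> 0 < s -> c1 W = c2 W ->
  (P W.+1 (ext a W s) c1 < P W.+1 (ext a W s) c2 <-> P W a (fun i => c1 i - c2 i) < 1).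
Proof.
move=> pa s0 e; have pe := pos_ext pa s0.
have -> : P W.+1 (ext a W s) c1 =
    P W.+1 (ext a W s) (fun i => c1 i - c2 i) * P W.+1 (ext a W s) c2.
  by rewrite -PD //; apply: P_eq => i _; split => //; rewrite subrK.
rewrite P_ext0; last by rewrite e subrr.
by rewrite -{2}[P W.+1 _ c2]mul1r ltr_pM2r // P_gt0.
Qed.

Lemma P_ext_mul W a t w c : P W.+1 (ext a W (t * w)) c = P W.+1 (ext a W t) c * w ^ c W.
Proof. by rewrite !P_ext expfzMl mulrA. Qed.

Lemma powNz (w : rat) (N : nat) (z : int) : (w ^+ N) ^ z = (w ^ z) ^+ N.
Proof. by rewrite !exprnP !exprz_exp mulrC. Qed.

Definition F (B' : nat) := (2 * B'`! * B'`! * B'.+1)%N.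

Lemma Fge B' : [/\ (B'`! <= F B')%N, (B' <= F B')%N, (2 * B' * B' <= F B')%N,
   (B'`! * B' + B'`! * B' * B'`! <= F B')%N & (2 * (B'`! * B') <= F B')%N].
Proof.
have h1 := fact_geq B'; have h2 := fact_gt0 B'; rewrite /F.
move: h1 h2; set N := B'`!; move=> h1 h2.
split; nia.
Qed.
Lemma coreG B' W a a' s : Good (F B') W a a' -> 0 < s ->
  (forall c, bnd B' W.+1 c -> 0 < c W -> P W.+1 (ext a W s) c != 1) ->
  exists s', 0 < s' /\ Good B' W.+1 (ext a W s) (ext a' W s').
Proof.
move=> G s0 gen.
have [FN FB FB2 FK F2] := Fge B'.
have [pa [pa' h]] := G.
have hdv : forall n, (0 < n <= B')%N -> (n %| B'`!)%N := fun n h => dvdn_fact h.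
have N0 := fact_gt0 B'.
move: (B'`!) hdv N0 FN FK F2 => N hdv N0 FN FK F2.
have [d [c1 [d0 [dN [c1W [c1b [pc1 hdvd]]]]]]] := stepA N0 pa s0.
have bc1 : bnd (F B') W (fun i => - c1 i).
  move=> i iW; have := c1b i iW; move: FN; clear; lia.
have dF : (d <= F B')%N by apply: leq_trans FN; apply: dvdn_leq.
have pd : ispow d (P W a (fun i => - c1 i)).
  have [z [z0 ez]] := pc1.
  rewrite P_ext c1W -exprnP in ez.
  exists (s / z ^+ (N %/ d)); split; first by rewrite divr_gt0 // exprn_gt0.
  rewrite PN exprMn exprVn -exprM divnK //.
  by rewrite -ez invfM mulrCA mulfV ?mulr1 // expf_neq0 // gt_eqF.
have [y [y0 ey]] : exists y, 0 < y /\ P W a' (fun i => - c1 i) = y ^+ d.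
  by have [_ h2] := h _ bc1; apply/(h2 d d0 dF).
have [q [pq [vqa vqy]]] := fresh W a' y.
have vqa' : forall i, (i < W)%N -> vq q (a' i) = 0.
  by move=> i iW; apply: vqa => //; rewrite gt_eqF // pa'.
have vqy' : vq q y = 0 by apply: vqy; rewrite gt_eqF.
have q0 : (0 : rat) < q%:R by rewrite ltr0n prime_gt0.
set t := y * q%:R ^+ (N %/ d).
have t0 : 0 < t by rewrite mulr_gt0 // exprn_gt0.
have pe := pos_ext pa s0; have pt := pos_ext pa' t0.
have SC := @stepC _ (N * B')%N _ _ _ _ _ _ _ _ _ G s0 y0 pq d0 dN N0 FN FK c1W c1b pc1 hdvd ey vqa' vqy'.
set m := fun c : nat -> int => (N %/ `|c W|)%N.
set g := fun c : nat -> int => ((P W.+1 (ext a' W t) c) ^+ m c)^-1.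
set cs := enumc B' W.+1.
set L := fun c : nat -> int => (0 < c W) && (1 < P W.+1 (ext a W s) c).
set U := fun c : nat -> int => (0 < c W) && (P W.+1 (ext a W s) c < 1).
have mdiv : forall c, bnd B' W.+1 c -> 0 < c W -> (`|c W| * m c = N)%N.
  move=> c bc cW; rewrite /m mulnC divnK //; apply: hdv.
  by rewrite absz_gt0 gt_eqF //=; exact: bc.
have mN : forall c, (m c <= N)%N by move=> c; rewrite /m leq_div.
have Pm : forall b u c, P W.+1 (ext b W u) c ^+ m c =
    P W.+1 (ext b W u) (fun i => (m c)%:Z * c i).
  by move=> b u c; rewrite (PZ W.+1 (ext b W u) c (m c)%:Z).
have mW : forall c, bnd B' W.+1 c -> 0 < c W -> (m c)%:Z * c W = N%:Z.
  move=> c bc cW; have := mdiv c bc cW; move: (m c) => k; move: cW; clear; nia.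
have mpos : forall c, bnd B' W.+1 c -> 0 < c W -> (0 < m c)%N.
  move=> c bc cW; have := mdiv c bc cW; move: (m c) (absz (c W)) => k l.
  move: N0; clear; nia.
have gpos : forall x, List.In x cs -> 0 < g x.
  by move=> x _; rewrite invr_gt0 exprn_gt0 // P_gt0.
have gsep : forall x z, List.In x cs -> List.In z cs -> L x -> U z -> g x < g z.
  move=> x z xi zi /andP[xW Lx] /andP[zW Uz].
  have bx := enumc_bnd xi; have bz := enumc_bnd zi.
  rewrite /g ltf_pV2 ?posrE ?exprn_gt0 ?P_gt0 // !Pm.
  have eW : (m z)%:Z * z W = (m x)%:Z * x W by rewrite !mW.
  apply/(ratio_lt pa' t0 eW).
  have bd : bnd (F B') W (fun i => (m z)%:Z * z i - (m x)%:Z * x i).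
    move=> i iW.
    have h1 : (absz ((m z)%:Z * z i)%R <= N * B')%N by rewrite abszM; apply: leq_mul; [exact: mN | exact: bz (ltnW iW)].
    have h2 : (absz ((m x)%:Z * x i)%R <= N * B')%N by rewrite abszM; apply: leq_mul; [exact: mN | exact: bx (ltnW iW)].
    move: h1 h2 F2; move: ((m z)%:Z * z i) ((m x)%:Z * x i) => u v; clear; lia.
  apply/(proj1 (h _ bd)); apply/(ratio_lt pa s0 eW).
  rewrite -!Pm; apply: (@lt_trans _ _ 1).
    by rewrite expr_lt1 ?(ltW (P_gt0 _ pe)) ?mpos.
  by rewrite expr_gt1 ?(ltW (P_gt0 _ pe)) ?mpos.
have [lo [hi [lo0 [lohi hlh]]]] := sep gpos gsep.
have NN0 : (0 < N * N)%N by rewrite muln_gt0 N0.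
have [w [w0 [wlo whi]]] := dense_pow NN0 lo0 lohi.
set s' := t * w ^+ N.
have s'0 : 0 < s' by rewrite mulr_gt0 // exprn_gt0.
have ps' := pos_ext pa' s'0.
have rel : forall c, P W.+1 (ext a' W s') c = P W.+1 (ext a' W t) c * (w ^ c W) ^+ N.
  by move=> c; rewrite P_ext_mul powNz.
have key : forall c, bnd B' W.+1 c -> 0 < c W ->
   (P W.+1 (ext a W s) c < 1 -> P W.+1 (ext a' W s') c < 1) /\
   (1 < P W.+1 (ext a W s) c -> 1 < P W.+1 (ext a' W s') c).
  move=> c bc cW.
  have [c2 [c2i hc2]] := enumc_cov bc.
  have E1 : P W.+1 (ext a W s) c = P W.+1 (ext a W s) c2.
    by apply: P_eq => i iW; split => //; exact: hc2.
  have E2 : P W.+1 (ext a' W s') c = P W.+1 (ext a' W s') c2.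
    by apply: P_eq => i iW; split => //; exact: hc2.
  rewrite E1 E2.
  have bc2 := enumc_bnd c2i.
  have c2W : 0 < c2 W by rewrite -hc2.
  have mp := mpos c2 bc2 c2W.
  have pw : (P W.+1 (ext a' W s') c2) ^+ m c2 = (g c2)^-1 * w ^+ (N * N).
    rewrite rel exprMn /g invrK; congr (_ * _).
    have -> : c2 W = (`|c2 W|%N)%:Z by rewrite gez0_abs // ltW.
    rewrite -exprnP -!exprM; congr (w ^+ _).
    by rewrite mulnAC mdiv // mulnC.
  have gc := gpos c2 c2i.
  split => H.
    have Uc : U c2 by rewrite /U c2W H.
    have hg := (proj2 (hlh c2 c2i)) Uc.
    rewrite -(expr_lt1 mp (ltW (P_gt0 _ ps'))) pw mulrC ltr_pdivrMr // mul1r.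
    exact: lt_le_trans whi hg.
  have Lc : L c2 by rewrite /L c2W H.
  have hg := (proj1 (hlh c2 c2i)) Lc.
  rewrite -(expr_gt1 mp (ltW (P_gt0 _ ps'))) pw mulrC ltr_pdivlMr // mul1r.
  exact: le_lt_trans hg wlo.
exists s'; split => //; split => //; split => // c bc.
split.
  case: (ltrgtP (c W) 0) => [cneg|cpos|c0].
  - set c' := fun i => - c i.
    have bc' : bnd B' W.+1 c' by move=> i /bc; rewrite /c' abszN.
    have cW' : 0 < c' W by rewrite /c' oppr_gt0.
    have e1 : P W.+1 (ext a W s) c = (P W.+1 (ext a W s) c')^-1 by rewrite PN invrK.
    have e2 : P W.+1 (ext a' W s') c = (P W.+1 (ext a' W s') c')^-1 by rewrite PN invrK.
    rewrite e1 e2 !invf_lt1 ?P_gt0 //.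
    have [k1 k2] := key c' bc' cW'.
    split; first exact: k2.
    move=> H; case: (ltrgtP (P W.+1 (ext a W s) c') 1) => [H1|H1|H1] //.
      by have := k1 H1; move: H; clear; lra.
    by move: (gen c' bc' cW'); rewrite H1 eqxx.
  - have [k1 k2] := key c bc cpos.
    split; first exact: k1.
    move=> H; case: (ltrgtP (P W.+1 (ext a W s) c) 1) => [H1|H1|H1] //.
      by have := k2 H1; move: H; clear; lra.
    by move: (gen c bc cpos); rewrite H1 eqxx.
  - rewrite !P_ext0 //; apply: (proj1 (h c _)).
    by move=> i iW; apply: leq_trans (bc i (ltnW iW)) FB.
move=> n n0 nB.
have nN : (n %| N)%N by apply: hdv; rewrite n0 nB.
set k := (N %/ n)%N.
have k0 : (0 < k)%N by rewrite divn_gt0 // dvdn_leq.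
have nk : (n * k)%N = N by rewrite /k mulnC divnK.
rewrite (ispowX n (P_gt0 c pe) k0) (ispowX n (P_gt0 c ps') k0) nk.
have Pk : forall b u, P W.+1 (ext b W u) c ^+ k = P W.+1 (ext b W u) (fun i => k%:Z * c i).
  by move=> b u; rewrite (PZ W.+1 (ext b W u) c k%:Z).
rewrite !Pk rel.
rewrite (ispowMu (P_gt0 _ pt) (ispowXn _ (exprz_gt0 _ w0))).
apply: SC => i iW; rewrite abszM; apply: leq_mul; first by rewrite /k leq_div.
exact: bc.
Qed.
Lemma core B' W a a' s : Good (F B') W a a' -> 0 < s ->
  exists s', 0 < s' /\ Good B' W.+1 (ext a W s) (ext a' W s').
Proof.
move=> G s0.
case: (classic (exists c, bnd B' W.+1 c /\ 0 < c W /\ P W.+1 (ext a W s) c = 1)).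
  move=> [c [bc [cW e]]]; apply: (coreE _ s0 bc cW e).
  by have [_ _ h _ _] := Fge B'; apply: Good_mono h G.
move=> nex; apply: coreG => // c bc cW; apply/eqP => e; apply: nex; exists c; split => //.
Qed.

Lemma P_widen W W' a c : (W <= W')%N -> (forall i, (W <= i < W')%N -> a i = 1) ->
  P W' a c = P W a c.
Proof.
move=> le ha; rewrite /P -(big_mkord xpredT (fun i => a i ^ c i)).
rewrite -(big_mkord xpredT (fun i => a i ^ c i)).
rewrite (@big_cat_nat _ _ _ W) //=.
rewrite [X in _ * X = _](_ : _ = 1) ?mulr1 //.
rewrite big_nat_cond big1 // => i /andP[hi _].
by rewrite ha // exp1rz.
Qed.

Lemma P_pull W a x c : (x < W)%N ->
  P W a c = P W (fun i => if i == x then 1 else a i) c * a x ^ c x.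
Proof.
move=> xW; rewrite /P (bigD1 (Ordinal xW)) //= [in RHS](bigD1 (Ordinal xW)) //=.
rewrite eqxx exp1rz mul1r mulrC.
congr (_ * _); apply: eq_bigr => i ix.
have : (i : nat) != x by apply: contra ix => /eqP e; apply/eqP; apply: val_inj.
by move/negbTE => ->.
Qed.
Lemma P_eqt W a b c d : (forall i, (i < W)%N -> a i ^ c i = b i ^ d i) ->
  P W a c = P W b d.
Proof. by move=> h; apply: eq_bigr => i _; apply: h. Qed.

Definition nabs (q : rat) : rat := if q == 0 then 1 else `|q|.

Lemma nabs_gt0 q : 0 < nabs q.
Proof. by rewrite /nabs; case: eqP => // /eqP q0; rewrite normr_gt0. Qed.

Lemma nabs1 : nabs 1 = 1.
Proof. by rewrite /nabs oner_eq0 normr1. Qed.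

Lemma nabs0 : nabs 0 = 1.
Proof. by rewrite /nabs eqxx. Qed.

Definition Rel B V (e e' : assignment) :=
  (forall v, (e v == 0) = (e' v == 0)) /\ (forall v, (0 < e v) = (0 < e' v)) /\
  (forall v, (V <= v)%N -> e v = 1 /\ e' v = 1) /\
  Good B V (fun v => nabs (e v)) (fun v => nabs (e' v)).

Lemma Rel_sym B V e e' : Rel B V e e' -> Rel B V e' e.
Proof.
move=> [Z [S [O G]]]; split; first by move=> v; rewrite Z.
split; first by move=> v; rewrite S.
split; last exact: Good_sym.
by move=> v /O [].
Qed.

Lemma Rel_mono B B2 V e e' : (B2 <= B)%N -> Rel B V e e' -> Rel B2 V e e'.
Proof. by move=> le [Z [S [O G]]]; do 3!split => //; apply: Good_mono le G. Qed.

Lemma forth B' V e e' x r : Rel (F B') V e e' ->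
  exists r', Rel B' (maxn V x.+1) (upd e x r) (upd e' x r').
Proof.
move=> [Z [S [One G]]].
set V' := maxn V x.+1.
have xV' : (x < V')%N by rewrite leq_max leqnn orbT.
have VV' : (V <= V')%N by rewrite leq_max leqnn.
set b := fun v => nabs (upd e x 1 v).
set b' := fun v => nabs (upd e' x 1 v).
have pb : pos V' b by move=> i _; exact: nabs_gt0.
have pb' : pos V' b' by move=> i _; exact: nabs_gt0.
have Gb : Good (F B') V' b b'.
  apply: (Good_transfer (leqnn _) G pb pb') => c bc.
  exists (fun i => if i == x then 0 else c i); split.
    by move=> i iV; case: ifP => // _; apply: bc; exact: leq_trans iV VV'.
  have wid : forall (f : assignment), (forall v, (V <= v)%N -> f v = 1) ->
      P V' (fun v => nabs (upd f x 1 v)) c =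
      P V (fun v => nabs (f v)) (fun i => if i == x then 0 else c i).
    move=> f hf; rewrite (P_widen _ VV').
      apply: P_eqt => i iV; rewrite /upd; case: ifP => _; first by rewrite nabs1 exp1rz expr0z.
      by [].
    by move=> i /andP[h1 h2]; rewrite /upd; case: ifP => _; rewrite ?nabs1 // hf // nabs1.
  split; first by apply: wid => v /One [].
  by apply: wid => v /One [].
have upd_ne : forall (f : assignment) y v, v != x -> upd f x y v = f v.
  by move=> f y v vx; rewrite /upd (negbTE vx).
have upd_eq : forall (f : assignment) y, upd f x y x = y.
  by move=> f y; rewrite /upd eqxx.
case: (eqVneq r 0) => [->|r0].
  exists 0; split.
    move=> v; case: (eqVneq v x) => [->|vx]; first by rewrite !upd_eq.
    by rewrite !upd_ne.
  split.
    move=> v; case: (eqVneq v x) => [->|vx]; first by rewrite !upd_eq.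
    by rewrite !upd_ne.
  split.
    move=> v vV; have vx : v != x by apply: contraTneq vV => ->; rewrite -ltnNge.
    by rewrite !upd_ne //; apply: One; exact: leq_trans VV' vV.
  apply: (Good_transfer (leqnn _) (Good_mono _ Gb)); first by have [_ h _ _ _] := Fge B'.
  - by move=> i _; exact: nabs_gt0.
  - by move=> i _; exact: nabs_gt0.
  move=> c bc; exists c; split => //; split; apply: P_eq => i _; split => //;
    rewrite /b /b' /upd; case: ifP => // _; by rewrite nabs0 nabs1.
set s := `|r|.
have s0 : 0 < s by rewrite normr_gt0.
have [s' [s'0 G2]] := core Gb s0.
exists (if 0 < r then s' else - s').
have r'0 : (if 0 < r then s' else - s') != 0.
  by case: ifP => _; rewrite ?oppr_eq0 gt_eqF.
have nr : nabs r = s by rewrite /nabs (negbTE r0).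
have nr' : nabs (if 0 < r then s' else - s') = s'.
  by rewrite /nabs (negbTE r'0); case: ifP => _; rewrite ?normrN gtr0_norm.
split.
  move=> v; case: (eqVneq v x) => [->|vx]; last by rewrite !upd_ne.
  by rewrite !upd_eq (negbTE r0) (negbTE r'0).
split.
  move=> v; case: (eqVneq v x) => [->|vx]; last by rewrite !upd_ne.
  rewrite !upd_eq; case: ifP => rp //; rewrite oppr_gt0; apply/esym/negbTE.
  by rewrite -leNgt ltW.
split.
  move=> v vV; have vx : v != x by apply: contraTneq vV => ->; rewrite -ltnNge.
  by rewrite !upd_ne //; apply: One; exact: leq_trans VV' vV.
apply: (Good_transfer (leqnn _) G2).
- by move=> i _; exact: nabs_gt0.
- by move=> i _; exact: nabs_gt0.
move=> c bc.
exists (fun i => if i == V' then c x else if i == x then 0 else c i); split.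
  move=> i; rewrite ltnS leq_eqVlt => /orP[/eqP ->|iV]; first by rewrite eqxx; apply: bc.
  by rewrite (ltn_eqF iV); case: ifP => // _; apply: bc.
have gen : forall (f : assignment) y (bb : nat -> rat), bb = (fun v => nabs (upd f x 1 v)) ->
    P V' (fun v => nabs (upd f x y v)) c =
    P V'.+1 (ext bb V' (nabs y)) (fun i => if i == V' then c x else if i == x then 0 else c i).
  move=> f y bb ->; rewrite P_ext eqxx (P_pull _ _ xV') upd_eq; congr (_ * _).
  apply: P_eqt => i iV; rewrite (ltn_eqF iV).
  case: (eqVneq i x) => [->|ix]; first by rewrite upd_eq nabs1 exp1rz expr0z.
  by rewrite !upd_ne.
split.
  by rewrite (gen e r b) // nr.
by rewrite (gen e' _ b') // nr'.
Qed.
Fixpoint tv (t : term) : seq nat :=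
  match t with TVar x => [:: x] | TMul a b => tv a ++ tv b end.

Lemma teval_prod e t : teval e t = \prod_(v <- tv t) e v.
Proof.
by elim: t => [x|a IHa b IHb] /=; rewrite ?big_seq1 // big_cat IHa IHb.
Qed.

Lemma sg_nabs (q : rat) : q = Num.sg q * nabs q.
Proof.
rewrite /nabs; case: eqP => [->|_]; first by rewrite sgr0 mul0r.
exact: numEsg.
Qed.

Lemma sg_prod e t : Num.sg (teval e t) = \prod_(v <- tv t) Num.sg (e v).
Proof.
rewrite teval_prod; apply: (big_morph _ (@sgrM _)); exact: sgr1.
Qed.

Lemma teval_split e t : teval e t = Num.sg (teval e t) * \prod_(v <- tv t) nabs (e v).
Proof.
rewrite sg_prod {1}teval_prod -big_split; apply: eq_bigr => v _; exact: sg_nabs.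
Qed.

Lemma sgE (x : rat) : Num.sg x = if x == 0 then 0 else if 0 < x then 1 else -1.
Proof.
case: (ltrgt0P x) => [xp|xn|->]; first by rewrite gtr0_sg // (gt_eqF xp) xp.
  by rewrite ltr0_sg // (lt_eqF xn) ltNge (ltW xn).
by rewrite sgr0 ?eqxx.
Qed.

Lemma sg_eq (x y : rat) : (x == 0) = (y == 0) -> (0 < x) = (0 < y) -> Num.sg x = Num.sg y.
Proof. by move=> h1 h2; rewrite !sgE h1 h2. Qed.
Lemma P_ind V f y : pos V f -> (forall v, (V <= v)%N -> f v = 1) ->
  P V f (fun v => ((y == v) : nat)%:Z) = f y.
Proof.
move=> pf hf; case: (ltnP y V) => yV; last first.
  rewrite hf // -(P0 V f); apply: P_eq => i iV; split => //.
  by case: eqP => // e; move: iV; rewrite -e ltnNge yV.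
rewrite (P_pull _ _ yV) eqxx /= expr1z -[RHS]mul1r; congr (_ * _).
transitivity (P V f (fun _ => 0)); last exact: P0.
apply: P_eqt => i iV; case: eqP => [->|ne].
  by rewrite eqxx /= ?exp1rz ?expr1z ?expr0z.
by have -> : (y == i) = false by apply/eqP => e; apply: ne.
Qed.

Lemma prod_cnt V f l : pos V f -> (forall v, (V <= v)%N -> f v = 1) ->
  \prod_(v <- l) f v = P V f (fun v => (count_mem v l)%:Z).
Proof.
move=> pf hf; elim: l => [|y l IH].
  by rewrite big_nil -(P0 V f); apply: P_eq.

rewrite big_cons IH -(P_ind y pf hf) -PD //; apply: P_eq => i _; split => //=.
Qed.

Lemma ratioW W a c1 c2 : pos W a ->
  (P W a c1 < P W a c2 <-> P W a (fun i => c1 i - c2 i) < 1).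
Proof.
move=> pa.
have -> : P W a c1 = P W a (fun i => c1 i - c2 i) * P W a c2.
  by rewrite -PD //; apply: P_eq => i _; split => //; rewrite subrK.
by rewrite -{2}[P W a c2]mul1r ltr_pM2r // P_gt0.
Qed.

Lemma cmp (z1 z2 N1 N2 N1' N2' : rat) : 0 < N1 -> 0 < N2 -> 0 < N1' -> 0 < N2' ->
  (N1 < N2 <-> N1' < N2') -> (N2 < N1 <-> N2' < N1') ->
  (Num.sg z1 * N1 < Num.sg z2 * N2 <-> Num.sg z1 * N1' < Num.sg z2 * N2') /\
  (Num.sg z1 * N1 = Num.sg z2 * N2 <-> Num.sg z1 * N1' = Num.sg z2 * N2').
Proof.
move=> p1 p2 p1' p2' [h1 h1'] [h2 h2'].
have sgc : forall z : rat, Num.sg z = 1 \/ Num.sg z = -1 \/ Num.sg z = 0.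
  move=> z; rewrite sgE; case: ifP => _; first by right; right.
  by case: ifP => _; [left | right; left].
have [lt|gt|eq] := ltrgtP N1 N2.
- have lt' := h1 lt.
  by case: (sgc z1) => [->|[->|->]]; case: (sgc z2) => [->|[->|->]];
    move: p1 p2 p1' p2' lt lt'; clear; split; split => H; lra.
- have gt' := h2 gt.
  by case: (sgc z1) => [->|[->|->]]; case: (sgc z2) => [->|[->|->]];
    move: p1 p2 p1' p2' gt gt'; clear; split; split => H; lra.
- have eq' : N1' = N2'.
    case: (ltrgtP N1' N2') => // H.
      by have := h1' H; rewrite eq ltxx.
    by have := h2' H; rewrite eq ltxx.
  by case: (sgc z1) => [->|[->|->]]; case: (sgc z2) => [->|[->|->]];
    move: p1 p2 p1' p2' eq eq'; clear; split; split => H; lra.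
Qed.
Lemma atom B V e e' t1 t2 : Rel B V e e' -> (size (tv t1) + size (tv t2) <= B)%N ->
  (teval e t1 < teval e t2 <-> teval e' t1 < teval e' t2) /\
  (teval e t1 = teval e t2 <-> teval e' t1 = teval e' t2).
Proof.
move=> [Z [S [O [pa [pa' h]]]]] sz.
have sgeq : forall t, Num.sg (teval e t) = Num.sg (teval e' t).
  by move=> t; rewrite !sg_prod; apply: eq_bigr => v _; apply: sg_eq.
have hf : forall v, (V <= v)%N -> nabs (e v) = 1 by move=> v /O [-> _]; exact: nabs1.
have hf' : forall v, (V <= v)%N -> nabs (e' v) = 1 by move=> v /O [_ ->]; exact: nabs1.
rewrite (teval_split e t1) (teval_split e t2) (teval_split e' t1) (teval_split e' t2) !sgeq.
rewrite !(prod_cnt _ pa hf) !(prod_cnt _ pa' hf').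
set c1 := fun v => (count_mem v (tv t1))%:Z.
set c2 := fun v => (count_mem v (tv t2))%:Z.
have bd : bnd B V (fun i => c1 i - c2 i).
  move=> i _; have := count_size (pred1 i) (tv t1); have := count_size (pred1 i) (tv t2).
  rewrite /c1 /c2; move: sz; move: (count_mem i (tv t1)) (count_mem i (tv t2)) => u v.
  move: (size (tv t1)) (size (tv t2)) => s1 s2; clear; lia.
have bd' : bnd B V (fun i => c2 i - c1 i).
  move=> i _; have := count_size (pred1 i) (tv t1); have := count_size (pred1 i) (tv t2).
  rewrite /c1 /c2; move: sz; move: (count_mem i (tv t1)) (count_mem i (tv t2)) => u v.
  move: (size (tv t1)) (size (tv t2)) => s1 s2; clear; lia.
apply: cmp; rewrite ?P_gt0 //.
  have := (h _ bd).1; have := ratioW c1 c2 pa; have := ratioW c1 c2 pa'; tauto.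
have := (h _ bd').1; have := ratioW c2 c1 pa; have := ratioW c2 c1 pa'; tauto.
Qed.

Fixpoint fb (f : formula) : nat :=
  match f with
  | FEq t1 t2 | FLt t1 t2 => (size (tv t1) + size (tv t2))%N
  | FNot p => fb p
  | FAnd p q | FOr p q | FImp p q => maxn (fb p) (fb q)
  | FEx _ p | FAll _ p => F (fb p)
  end.

Lemma main f : forall V e e', Rel (fb f) V e e' -> (sat e f <-> sat e' f).
Proof.
elim: f => [t1 t2|t1 t2|p IH|p IHp q IHq|p IHp q IHq|p IHp q IHq|x p IH|x p IH]
  V e e' R /=.
- by have [_ h] := atom R (leqnn _).
- by have [h _] := atom R (leqnn _).
- by have := IH V e e' R; tauto.
- have := IHp V e e' (Rel_mono (leq_maxl _ _) R).
  have := IHq V e e' (Rel_mono (leq_maxr _ _) R); tauto.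
- have := IHp V e e' (Rel_mono (leq_maxl _ _) R).
  have := IHq V e e' (Rel_mono (leq_maxr _ _) R); tauto.
- have := IHp V e e' (Rel_mono (leq_maxl _ _) R).
  have := IHq V e e' (Rel_mono (leq_maxr _ _) R); tauto.
- split.
    move=> [r H]; have [r' R'] := forth x r R.
    by exists r'; apply/(IH _ _ _ R').
  move=> [r' H]; have [r R'] := forth x r' (Rel_sym R).
  by exists r; apply/(IH _ _ _ (Rel_sym R')).
- split.
    move=> H r'; have [r R'] := forth x r' (Rel_sym R).
    by apply/(IH _ _ _ (Rel_sym R')).
  move=> H r; have [r' R'] := forth x r R.
  by apply/(IH _ _ _ R').
Qed.
Lemma pw_lt1 (p : rat) (z : int) : 1 < p -> (p ^ z < 1 <-> z < 0).
Proof.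
move=> p1; have p0 : 0 < p by apply: lt_trans p1.
case: z => n.
  rewrite -exprnP; split => // H; exfalso.
  by have := exprn_ege1 n (ltW p1); move: H; clear; lra.
rewrite NegzE -exprnN invf_lt1 ?exprn_gt0 //; split => // _.
by rewrite exprn_egt1.
Qed.

Lemma pw_pow (p : nat) (z : int) (n : nat) : prime p -> (0 < n)%N ->
  (ispow n ((p%:R : rat) ^ z) <-> (n%:Z %| z)%Z).
Proof.
move=> pp n0; have p0 : (0 : rat) < p%:R by rewrite ltr0n prime_gt0.
split.
  move=> [w [w0 e]]; have := congr1 (vq p) e.
  rewrite vqXz ?gt_eqF // vq_prime // vqXn ?gt_eqF // mulr1 => ->.
  by apply/dvdzP; exists (vq p w); rewrite mulrC.
move/dvdzP => [j ->]; exists ((p%:R : rat) ^ j); split; first exact: exprz_gt0.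
by rewrite exprnP exprz_exp.
Qed.

Definition e0 : assignment := fun v => if v == 2%N then 2 else 1.
Definition e1 : assignment := fun v => if v == 2%N then 3 else 1.

Lemma P3 (p : rat) c : 0 < p ->
  P 3 (fun v => nabs (if v == 2%N then p else 1)) c = p ^ c 2%N.
Proof.
move=> p0; rewrite /P !big_ord_recr big_ord0 /= nabs1 !exp1rz !mul1r /nabs.
by rewrite gt_eqF // gtr0_norm.
Qed.

Lemma base B : Rel B 3 e0 e1.
Proof.
split; first by move=> v; rewrite /e0 /e1; case: ifP.
split; first by move=> v; rewrite /e0 /e1; case: ifP.
split.
  move=> v v3; have vn : (v == 2%N) = false by apply/negbTE; apply: contraTneq v3 => ->.
  by rewrite /e0 /e1 vn.
split; first by move=> i _; exact: nabs_gt0.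
split; first by move=> i _; exact: nabs_gt0.
move=> c bc; rewrite /e0 /e1 !P3 //; split.
  rewrite !pw_lt1 //.
move=> n n0 _.
by rewrite !pw_pow.
Qed.

Theorem corollary1 :
  ~ exists phi : formula,
      (forall v : nat, free_in v phi -> (v <= 2)%N) /\
      (forall e : assignment, sat e phi <-> e 2%N = e 0%N + e 1%N).
Proof.
move=> [phi [_ H]].
have M := main (base (fb phi)).
have h0 := H e0; have h1 := H e1.
have : sat e0 phi by apply/h0; rewrite /e0 /=.
move/M/h1; rewrite /e1 /=.
move=> E; move: E; clear; lra.
Qed.
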